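(* For every integer $s$ with $0\le s\le q-2$, the code $B_0^{ext}(s)$ has parameters $[q^2+1,(s+1)^2,q^2+1-s(q+1)]$ over $\mathbf{F}_q$.
   Context: Let $0\le s\le q-1$. $B^{ext}(s)\subseteq\mathbf{F}_{q^2}^{q^2+1}$ is the $\mathbf{F}_{q^2}$-linear code spanned by the vectors obtained by evaluating the binary forms $x^{i+qj}y^{(s-i)+q(s-j)}$, $0\le i,j\le s$, at all points of $\mathbf{P}^1(\mathbf{F}_{q^2})$ (in a fixed order, each point represented with first nonzero coordinate equal to $1$). $B_0^{ext}(s)$ is the subfield subcode $B^{ext}(s)\cap\mathbf{F}_q^{q^2+1}$. Parameters $[n,k,d]$ denote length, dimension over $\mathbf{F}_q$, and minimum Hamming distance. *)

(* Defs.v *)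
From HB Require Import structures.
From mathcomp Require Import all_boot all_order all_algebra.
Set Implicit Arguments. Unset Strict Implicit. Unset Printing Implicit Defensive.
Import GRing.Theory.
Local Open Scope ring_scope.

(* Points of P^1(F), indexed by [option F]:
   Some a  <-> the point (1 : a);   None <-> the point (0 : 1).
   Each point is represented with first nonzero coordinate equal to 1. *)
Definition P1pt (F : fieldType) (o : option F) : F * F :=
  match o with Some a => (1, a) | None => (0, 1) end.

Definition P1len (F : finFieldType) : nat := #|{: option F}|.

Definition P1at (F : finFieldType) (k : 'I_(P1len F)) : F * F :=
  P1pt (@enum_val (option F) {: option F} k).

Definition Bgen (F : finFieldType) (q s i j : nat) : 'rV[F]_(P1len F) :=
  \row_k ((P1at k).1 ^+ (i + q * j) * (P1at k).2 ^+ ((s - i) + q * (s - j))).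

Definition Bext (F : finFieldType) (q s : nat) : {vspace 'rV[F]_(P1len F)} :=
  <<[seq Bgen F q s i j | i <- iota 0 s.+1, j <- iota 0 s.+1]>>%VS.

Definition B0ext (K F : finFieldType) (f : {rmorphism K -> F}) (q s : nat)
  : {set 'rV[K]_(P1len F)} :=
  [set c | map_mx f c \in Bext F q s].

Definition hwt (K : fieldType) n (c : 'rV[K]_n) : nat := #|[set k | c 0 k != 0]|.
Definition hdist (K : fieldType) n (c d : 'rV[K]_n) : nat :=
  #|[set k | c 0 k != d 0 k]|.

Definition is_min_dist (K : finFieldType) n (C : {set 'rV[K]_n}) (d : nat) :=
  (exists c1, exists c2, [/\ c1 \in C, c2 \in C, c1 != c2 & hdist c1 c2 = d])
  /\ (forall c1 c2, c1 \in C -> c2 \in C -> c1 != c2 -> (d <= hdist c1 c2)%N).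

Definition code_dim (K : finFieldType) n (C : {set 'rV[K]_n}) : nat :=
  \dim <<enum C>>%VS.

(* Main.v *)
Require Import Defs.
From HB Require Import structures.
From mathcomp Require Import all_boot all_order all_algebra all_field.
From Stdlib Require Import Lia.
Set Implicit Arguments. Unset Strict Implicit. Unset Printing Implicit Defensive.
Import GRing.Theory.
Local Open Scope ring_scope.

Section Fields.
Variables (q : nat) (K F : finFieldType) (f : {rmorphism K -> F}).
Hypotheses (hK : #|K| = q) (hF : #|F| = (q ^ 2)%N).

Lemma q_gt1 : (1 < q)%N.
Proof. by rewrite -hK finNzRing_gt1. Qed.

Lemma xqK (k : K) : k ^+ q = k.
Proof. by rewrite -hK expf_card. Qed.

Lemma xq2 (x : F) : (x ^+ q) ^+ q = x.
Proof. by rewrite -exprM mulnn -hF expf_card. Qed.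

Lemma pchar_q : [pchar F].-nat q.
Proof.
have [p pr_p pK] := finPcharP K.
have pF : p \in [pchar F] by rewrite -(fmorph_pchar f) in pK.
have := card_pprimeChar pK; rewrite /= hK => ->.
rewrite (eq_pnat _ (pcharf_eq pF)).
by rewrite pnatX pnat_id.
Qed.

Lemma frobD (x y : F) : (x + y) ^+ q = x ^+ q + y ^+ q.
Proof. exact: exprDn_pchar pchar_q. Qed.

Lemma card_fix (A : {set F}) : (forall x, x \in A -> x ^+ q = x) -> (#|A| <= q)%N.
Proof.
move=> hA.
have nz : ('X^q - 'X : {poly F}) != 0.
  by rewrite -size_poly_eq0 size_polyDl ?size_polyXn // size_polyN size_polyX ltnS; exact: q_gt1.
have := max_poly_roots nz.
rewrite size_polyDl ?size_polyXn ?size_polyN ?size_polyX ?ltnS ?q_gt1 //.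
move=> /(_ (enum A)); rewrite enum_uniq cardE; apply => //.
apply/allP=> x; rewrite mem_enum => /hA hx.
by rewrite rootE !hornerE hx subrr.
Qed.

Definition g (x : F) : K := odflt 0 [pick k | f k == x].

Lemma fixed_img (x : F) : x ^+ q = x -> f (g x) = x.
Proof.
move=> hx.
pose S := [set y : F | y ^+ q == y].
have sub : f @: [set: K] \subset S.
  apply/subsetP=> y /imsetP[k _ ->]; by rewrite inE -rmorphXn xqK.
have cI : #|f @: [set: K]| = q by rewrite card_imset ?cardsT ?hK //; exact: fmorph_inj.
have eqS : f @: [set: K] = S.
  apply/eqP; rewrite eqEcard sub cI card_fix // => y; by rewrite inE; move/eqP.
have : x \in f @: [set: K] by rewrite eqS inE hx.
case/imsetP=> k _ ->.
rewrite /g; case: pickP => [k' /eqP /fmorph_inj -> //|/(_ k)]; by rewrite eqxx.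
Qed.

Lemma gf (k : K) : g (f k) = k.
Proof. apply: (fmorph_inj f); apply: fixed_img; by rewrite -rmorphXn xqK. Qed.

Lemma exists_omega : exists w : F, w ^+ q != w.
Proof.
apply/existsP; rewrite -negb_forall; apply/negP => /forallP H.
have := card_fix (A := [set: F]) (fun x _ => eqP (H x)).
rewrite cardsT hF; apply/negP; rewrite -ltnNge.
by rewrite -{1}(expn1 q) ltn_exp2l ?q_gt1.
Qed.

End Fields.


Section Code.
Variables (q s : nat) (K F : finFieldType) (f : {rmorphism K -> F}).
Hypotheses (hK : #|K| = q) (hF : #|F| = (q ^ 2)%N) (hs : (s <= q - 2)%N).

Definition LL := [seq (i, j) | i <- iota 0 s.+1, j <- iota 0 s.+1].
Definition XX := [seq Bgen F q s i j | i <- iota 0 s.+1, j <- iota 0 s.+1].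
Definition ex (p : nat * nat) := (s - p.1 + q * (s - p.2))%N.
Definition top := (s + q * s)%N.

Lemma qgt0 : (0 < q)%N. Proof. by apply: ltnW; apply: q_gt1 hK. Qed.

Lemma XXE : XX = map (fun p => Bgen F q s p.1 p.2) LL.
Proof. by rewrite /XX /LL map_allpairs. Qed.

Lemma XXE' : [seq Bgen F q s i j | i <- iota 0 s.+1, j <- iota 0 s.+1] =
  map (fun p => Bgen F q s p.1 p.2) LL.
Proof. exact: XXE. Qed.

Lemma size_LL : size LL = (s.+1 ^ 2)%N.
Proof. by rewrite /LL size_allpairs size_iota mulnn. Qed.

Lemma size_XX : size XX = (s.+1 ^ 2)%N.
Proof. by rewrite XXE size_map size_LL. Qed.

Lemma uniq_LL : uniq LL.
Proof. by rewrite /LL allpairs_uniq ?iota_uniq // => -[a b] [c d] _ _. Qed.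

Lemma mem_LL p : (p \in LL) = (p.1 <= s)%N && (p.2 <= s)%N.
Proof.
apply/allpairsP/andP => [[p' [ha hb ->]]|[ha hb]].
  by move: ha hb; rewrite !mem_iota /= !add0n !ltnS => -> ->.
by exists p; rewrite !mem_iota /= !add0n !ltnS ha hb; case: p {ha hb}.
Qed.

Lemma top_ex a b : (a <= s)%N -> (b <= s)%N ->
  (top == ex (a, b)) = (a + q * b == 0)%N.
Proof.
move=> ha hb; rewrite /top /ex /=.
have H : ((s - a + q * (s - b)) + (a + q * b) = s + q * s)%N.
  by rewrite addnACA subnK // -mulnDr subnK.
by rewrite -H -{2}[(s - a + q * (s - b))%N]addn0 eqn_add2l eq_sym.
Qed.

Lemma slt : (s < q)%N.
Proof.
apply: (leq_ltn_trans hs); rewrite ltn_subrL /=; exact: qgt0.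
Qed.

Lemma ex_inj : {in LL &, injective ex}.
Proof.
move=> [a b] [c d]; rewrite !mem_LL /= => /andP[ha hb] /andP[hc hd].
rewrite /ex /= => E.
have hq := qgt0.
have lt1 : (s - a < q)%N by apply: leq_ltn_trans (leq_subr _ _) slt.
have lt2 : (s - c < q)%N by apply: leq_ltn_trans (leq_subr _ _) slt.
have E1 : (s - a = s - c)%N.
  have := congr1 (modn^~ q) E; rewrite ![(q * _)%N]mulnC.
  by rewrite ![(_ + _ * q)%N]addnC !modnMDl !modn_small.
have E2 : (s - b = s - d)%N.
  have := congr1 (divn^~ q) E; rewrite ![(q * _)%N]mulnC.
  by rewrite ![(_ + _ * q)%N]addnC !divnMDl // !divn_small // !addn0.
by rewrite -(subKn ha) -(subKn hb) E1 E2 !subKn.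
Qed.

Lemma ex_le p : p \in LL -> (ex p <= top)%N.
Proof.
case: p => a b; rewrite mem_LL /= /ex /top => /andP[ha hb] /=.
by rewrite leq_add ?leq_subr // leq_mul2l leq_subr orbT.
Qed.

Lemma top_lt : (top < q ^ 2)%N.
Proof.
rewrite /top -[(s + q * s)%N]mulSn mulnC.
have hq := q_gt1 hK.
apply: (@leq_ltn_trans ((q - 2) * q.+1)%N); first by rewrite leq_mul2r hs orbT.
move: hq; case: q => // [[|q']] // _.
rewrite subSS subSS subn0 -mulnn.
rewrite !mulSn !mulnS; apply/ltP; rewrite -!plusE; lia.
Qed.

Definition PP (k : 'I_(size XX) -> F) : {poly F} :=
  \sum_(i < size XX) k i *: 'X^(ex (nth (0,0)%N LL i)).

Lemma Bgen_val i j (pos : 'I_(P1len F)) :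
  Bgen F q s i j 0 pos =
  match enum_val pos with Some a => a ^+ (s - i + q * (s - j)) | None => ((i + q * j)%N == 0%N)%:R end.
Proof.
rewrite mxE /P1at; case: (enum_val pos) => [a|] /=.
  by rewrite expr1n mul1r.
by rewrite expr1n mulr1 expr0n.
Qed.

Lemma nth_XX i : (i < size XX)%N ->
  XX`_i = Bgen F q s (nth (0,0)%N LL i).1 (nth (0,0)%N LL i).2.
Proof. move=> hi; rewrite XXE (nth_map (0,0)%N) // -(size_map (fun p => Bgen F q s p.1 p.2)) -XXE //. Qed.

Lemma sum_val (k : 'I_(size XX) -> F) pos :
  (\sum_(i < size XX) k i *: XX`_i) 0 pos =
  match enum_val pos with Some a => (PP k).[a] | None => (PP k)`_top end.
Proof.
rewrite summxE /PP.
case E: (enum_val pos) => [a|].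
  rewrite horner_sum; apply: eq_bigr => i _.
  by rewrite mxE nth_XX // Bgen_val E hornerZ hornerXn.
rewrite coef_sum; apply: eq_bigr => i _.
rewrite mxE nth_XX // Bgen_val E coefZ coefXn.
have : nth (0,0)%N LL i \in LL by apply: mem_nth; rewrite size_LL -size_XX.
case: (nth _ LL i) => a b; rewrite mem_LL /= => /andP[ha hb].
by rewrite top_ex.
Qed.

Lemma size_PP k : (size (PP k) <= top.+1)%N.
Proof.
rewrite /PP; apply: (leq_trans (size_sum _ _ _)).
elim/big_ind: _ => // [x y hx hy|i _]; first by rewrite geq_max hx hy.
apply: (leq_trans (size_scale_leq _ _)); rewrite size_polyXn ltnS ex_le //.
by apply: mem_nth; rewrite size_LL -size_XX.
Qed.

Lemma coef_PP k (i : 'I_(size XX)) : (PP k)`_(ex (nth (0,0)%N LL i)) = k i.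
Proof.
rewrite /PP coef_sum (bigD1 i) //= coefZ coefXn eqxx mulr1 big1 ?addr0 // => j hj.
rewrite coefZ coefXn.
have hi : (i < size LL)%N by rewrite size_LL -size_XX.
have hj' : (j < size LL)%N by rewrite size_LL -size_XX.
case: eqP => [/ex_inj|]; last by rewrite mulr0.
move=> /(_ (mem_nth _ hi) (mem_nth _ hj')).
by move/eqP; rewrite nth_uniq ?uniq_LL // => /eqP/val_inj E; rewrite E eqxx in hj.
Qed.

End Code.


Lemma card_opt (T : finType) (G : option T -> bool) :
  #|[set pos : 'I_#|{: option T}| | G (@enum_val (option T) {: option T} pos)]| =
  (G None + #|[set a | G (Some a)]|)%N.
Proof.
have -> : #|[set pos : 'I_#|{: option T}| | G (@enum_val (option T) {: option T} pos)]|
   = #|[set o | G o]|.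
  rewrite -(card_imset _ (@enum_val_inj _ _)); apply: eq_card => o.
  rewrite [in RHS]inE; apply/imsetP/idP => [[p]|h]; first by rewrite inE => h ->.
  by exists (enum_rank o); rewrite ?inE enum_rankK.
rewrite (cardsD1 None) inE; congr addn.
have Sinj : injective (@Some T) by move=> x y [].
rewrite -(card_imset _ Sinj); apply: eq_card => o.
rewrite !inE; case: o => [a|] /=.
  apply/idP/imsetP => [h|[b]]; first by exists a; rewrite ?inE.
  by rewrite inE => h [->].
by apply/esym/imsetP => -[b].
Qed.

Lemma card_optF (T : finFieldType) (G : option T -> bool) :
  #|[set pos : 'I_(P1len T) | G (enum_val pos)]| =
  (G None + #|[set a | G (Some a)]|)%N.
Proof. exact: card_opt. Qed.

Section Code2.
Variables (q s : nat) (K F : finFieldType) (f : {rmorphism K -> F}).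
Hypotheses (hK : #|K| = q) (hF : #|F| = (q ^ 2)%N) (hs : (s <= q - 2)%N).

Local Notation XX := (XX q s F).
Local Notation LL := (LL s).
Local Notation PP := (@PP q s F).
Local Notation top := (top q s).

Lemma row_eval (k : 'I_(size XX) -> F) :
  (forall a, (PP k).[a] = 0) -> PP k = 0.
Proof.
move=> H; apply/eqP; apply/negPn/negP => nz.
have := max_poly_roots nz.
move=> /(_ (enum F)); rewrite enum_uniq => /(_ _ isT).
have -> : all (root (PP k)) (enum F) by apply/allP => a _; rewrite /root H.
move=> /(_ isT); rewrite -cardE hF => lt.
have := leq_trans lt (size_PP k); rewrite ltnS leqNgt (top_lt hK hF hs) //.
Qed.

Lemma free_XX : free XX.
Proof.
have := @freeP _ _ _ (in_tuple XX). simpl.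
move=> /= H; apply/H => k hk i.
have P0 : PP k = 0.
  apply: row_eval => a.
  have := congr1 (fun w : 'rV_(P1len F) => w 0 (enum_rank (Some a))) hk.
  by rewrite /= sum_val enum_rankK mxE.
by rewrite -(coef_PP hK hs k i) P0 coef0.
Qed.

Lemma dim_Bext : \dim (Bext F q s) = (s.+1 ^ 2)%N.
Proof. by rewrite -(size_XX q s F); apply/eqP; exact: free_XX. Qed.

Lemma zeros_le (w : 'rV[F]_(P1len F)) : w \in Bext F q s -> w != 0 ->
  (#|[set pos | w 0%R pos == 0%R]| <= top)%N.
Proof.
move=> /(coord_span (X := in_tuple XX)) wE nzw.
set k := fun i => coord (in_tuple XX) i w in wE.
have ev (pos : 'I_(P1len F)) : w 0 pos = match enum_val pos with Some a => (PP k).[a] | None => (PP k)`_top end.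
  by rewrite [in LHS]wE sum_val.
pose G := fun o => match o with Some a => (PP k).[a] == 0 | None => (PP k)`_top == 0 end.
have -> : [set pos | w 0 pos == 0] = [set pos | G (enum_val pos)].
  by apply/setP => pos; rewrite !inE ev; case: (enum_val pos).
rewrite (card_optF G) /G /=.
have nzP : PP k != 0.
  apply/eqP => P0; move/eqP: nzw; apply; apply/rowP => pos; rewrite ev mxE P0.
  by case: (enum_val pos) => [a|]; rewrite ?horner0 ?coef0.
have hroots : (#|[set a | (PP k).[a] == 0%R]| < size (PP k))%N.
  rewrite cardE; apply: max_poly_roots => //; last exact: enum_uniq.
  by apply/allP => a; rewrite mem_enum inE.
have hsz := size_PP k.
case: eqP => [ct|ct] /=.
  have : (size (PP k) <= top)%N.
    move: hsz; rewrite leq_eqVlt ltnS => /orP[/eqP hs1|//].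
    move: nzP; rewrite -lead_coef_eq0 lead_coefE hs1 /= ct eqxx //.
  move=> h2; have := leq_trans hroots h2.
  by case: (top) => // t; rewrite add1n.
by rewrite add0n -ltnS (leq_trans hroots).
Qed.

End Code2.


Section Dim.
Variables (q s : nat) (K F : finFieldType) (f : {rmorphism K -> F}).
Hypotheses (hK : #|K| = q) (hF : #|F| = (q ^ 2)%N) (hs : (s <= q - 2)%N).

Local Notation n := (P1len F).
Local Notation XX := (XX q s F).
Local Notation LL := (LL s).

Definition fr (w : 'rV[F]_n) : 'rV[F]_n := map_mx (fun x => x ^+ q) w.

Lemma frob0 : (0 : F) ^+ q = 0.
Proof. by rewrite expr0n; case: q (qgt0 hK). Qed.

Lemma frob_sum I (r : seq I) (P : pred I) (E : I -> F) :
  (\sum_(i <- r | P i) E i) ^+ q = \sum_(i <- r | P i) E i ^+ q.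
Proof.
exact: (big_morph (fun x : F => x ^+ q) (frobD f hK) frob0).
Qed.

Lemma fr_lin I (r : seq I) (P : pred I) (c : I -> F) (v : I -> 'rV[F]_n) :
  fr (\sum_(i <- r | P i) c i *: v i) = \sum_(i <- r | P i) c i ^+ q *: fr (v i).
Proof.
apply/rowP => k; rewrite !mxE summxE frob_sum summxE; apply: eq_bigr => i _.
by rewrite !mxE exprMn.
Qed.

Lemma frZ c v : fr (c *: v) = c ^+ q *: fr v.
Proof. by apply/rowP => k; rewrite !mxE exprMn. Qed.

Lemma frD u v : fr (u + v) = fr u + fr v.
Proof. by apply/rowP => k; rewrite !mxE (frobD f hK). Qed.

Lemma frK v : fr (fr v) = v.
Proof. by apply/rowP => k; rewrite !mxE (xq2 hF). Qed.

Lemma fr_gen i j : (i <= s)%N -> (j <= s)%N -> fr (Bgen F q s i j) = Bgen F q s j i.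
Proof.
move=> hi hj; apply/rowP => k; rewrite mxE !Bgen_val.
case: (enum_val k) => [a|].
  have aux m : a ^+ (q * q * m) = a ^+ m by rewrite !exprM (xq2 hF).
  rewrite -exprM mulnDl exprD [((q * _) * q)%N]mulnC mulnA aux.
  by rewrite mulnC exprD mulrC.
have q0 : (q != 0)%N by rewrite -lt0n (qgt0 hK).
rewrite !addn_eq0 !muln_eq0 (negPf q0) /= andbC.
by case: (_ && _); rewrite ?expr1n ?frob0.
Qed.

Lemma fr_Bext w : w \in Bext F q s -> fr w \in Bext F q s.
Proof.
move=> /(coord_span (X := in_tuple XX)) ->.
rewrite fr_lin; apply: memv_suml => i _; apply: memvZ.
have hi : (i < size XX)%N by [].
rewrite /= nth_XX //.
have : nth (0,0)%N LL i \in LL by apply: mem_nth; rewrite size_LL -(size_XX q s F).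
case: (nth _ LL i) => a b; rewrite mem_LL /= => /andP[ha hb].
rewrite fr_gen //; apply: memv_span; rewrite XXE'; apply/mapP.
by exists (b, a); rewrite // mem_LL ha hb.
Qed.

Lemma mapf_lin I (r : seq I) (P : pred I) (c : I -> K) (v : I -> 'rV[K]_n) :
  map_mx f (\sum_(i <- r | P i) c i *: v i) = \sum_(i <- r | P i) f (c i) *: map_mx f (v i).
Proof.
apply/rowP => k; rewrite !mxE summxE rmorph_sum summxE; apply: eq_bigr => i _.
by rewrite !mxE rmorphM.
Qed.

Local Notation B0 := (B0ext f q s).
Local Notation U := (<<enum B0>>%VS).

Lemma U_mem u : u \in U -> map_mx f u \in Bext F q s.
Proof.
move=> /(coord_span (X := in_tuple (enum B0))) ->; rewrite mapf_lin.
apply: memv_suml => i _; apply: memvZ.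
have : (enum B0)`_i \in B0 by rewrite -mem_enum mem_nth.
by rewrite inE.
Qed.

Lemma lift_fixed (y : 'rV[F]_n) : (forall i k, y i k ^+ q = y i k) ->
  map_mx f (map_mx (g f) y) = y.
Proof. by move=> hy; apply/matrixP => i k; rewrite !mxE (fixed_img f hK). Qed.

Lemma fixed_T w : forall i k, (w + fr w) i k ^+ q = (w + fr w) i k.
Proof. by move=> i k; rewrite !mxE (frobD f hK) (xq2 hF) addrC. Qed.

Lemma dim_B0 : \dim U = (s.+1 ^ 2)%N.
Proof.
have [om hom] := exists_omega hK hF.
set b := vbasis U.
have freeb : free b := basis_free (vbasisP U).
pose fb := map_tuple (map_mx f) b.
have fb_i (i : 'I_(\dim U)) : fb`_i = map_mx f b`_i.
  by rewrite /= (nth_map 0) // size_tuple.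
have fbB : (<<fb>> <= Bext F q s)%VS.
  apply/span_subvP => v /mapP[u hu ->]; exact: U_mem (vbasis_mem hu).
have fbfix (i : 'I_(\dim U)) : fr fb`_i = fb`_i.
  by rewrite fb_i; apply/rowP => k; rewrite !mxE -rmorphXn (xqK hK).
have free_fb : free fb.
  apply/freeP => c hc i.
  have key lam : lam * c i + (lam * c i) ^+ q = 0.
    pose d j := lam * c j + (lam * c j) ^+ q.
    have dfix j : d j ^+ q = d j by rewrite /d (frobD f hK) (xq2 hF) addrC.
    have S0 : \sum_j d j *: fb`_j = 0.
      under eq_bigr do rewrite scalerDl.
      rewrite big_split /=.
      have E1 : \sum_j (lam * c j) *: fb`_j = 0.
        under eq_bigr do rewrite -scalerA.
        by rewrite -scaler_sumr hc scaler0.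
      have E2 : \sum_j (lam * c j) ^+ q *: fb`_j = 0.
        transitivity (fr (\sum_j (lam * c j) *: fb`_j)).
          by rewrite fr_lin; under [RHS]eq_bigr do rewrite fbfix.
        rewrite E1; apply/rowP => k; rewrite !mxE; exact: frob0.
      by rewrite E1 E2 addr0.
    have : map_mx f (\sum_j g f (d j) *: b`_j) = 0.
      rewrite mapf_lin -[RHS]S0; apply: eq_bigr => j _.
      by rewrite (fixed_img f hK) ?dfix // fb_i.
    rewrite -(map_mx0 f) => /map_mx_inj.
    move/freeP: freeb => Hb /Hb /(_ i) /(congr1 f).
    by rewrite (fixed_img f hK) ?dfix // rmorph0.
  have k1 := key 1; have kw := key om.
  rewrite mul1r in k1.
  have cq : c i ^+ q = - c i by apply/eqP; rewrite -addr_eq0 addrC k1.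
  rewrite exprMn cq mulrN -mulNr -mulrDl in kw.
  move/eqP: kw; rewrite mulf_eq0 => /orP[|/eqP //].
  by rewrite subr_eq0 eq_sym (negPf hom).
have dimfb : \dim <<fb>> = \dim U by rewrite (eqnP free_fb) size_tuple.
have BsubFb : (Bext F q s <= <<fb>>)%VS.
  apply/subvP => w hw.
  have hfix y : y \in Bext F q s -> (forall i k, y i k ^+ q = y i k) -> y \in <<fb>>%VS.
    move=> hy hy'; set u := map_mx (g f) y.
    have uU : u \in U by apply: memv_span; rewrite mem_enum inE lift_fixed.
    rewrite -(lift_fixed hy') -/u (coord_vbasis uU) mapf_lin.
    apply: memv_suml => i _; apply: memvZ; rewrite -fb_i; apply: memv_span.
    by apply: mem_nth; rewrite size_tuple.
  have T1 := hfix _ (memvD hw (fr_Bext hw)) (fixed_T w).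
  have hw2 : om *: w \in Bext F q s by rewrite memvZ.
  have T2 := hfix _ (memvD hw2 (fr_Bext hw2)) (fixed_T (om *: w)).
  have nz : om ^+ q - om != 0 by rewrite subr_eq0.
  have -> : w = (om ^+ q - om)^-1 *: (om ^+ q *: (w + fr w) - (om *: w + fr (om *: w))).
    have E : om ^+ q *: (w + fr w) - (om *: w + fr (om *: w)) = (om ^+ q - om) *: w.
      by rewrite frZ !scalerDr opprD addrACA subrr addr0 scalerBl.
    by rewrite E scalerA mulVf // scale1r.
  by rewrite memvZ // memvB // memvZ.
rewrite -dimfb; apply/eqP; rewrite eqn_leq.
rewrite -{1}(dim_Bext hK hF hs) dimvS //=.
by rewrite -(dim_Bext hK hF hs) dimvS.
Qed.

End Dim.


Section Norm.
Variables (q : nat) (K F : finFieldType) (f : {rmorphism K -> F}).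
Hypotheses (hK : #|K| = q) (hF : #|F| = (q ^ 2)%N).

Definition NN (a : F) := a ^+ q.+1.

Lemma NN_fix a : NN a ^+ q = NN a.
Proof. by rewrite /NN -exprM mulSn exprD mulnn -hF expf_card exprSr. Qed.

Lemma fib_le u : u != 0 -> (#|[set a | NN a == u]| <= q.+1)%N.
Proof.
move=> nzu.
have nz : ('X^(q.+1) - u%:P : {poly F}) != 0.
  by rewrite -size_poly_eq0 size_polyDl ?size_polyXn // size_polyN size_polyC nzu.
have := max_poly_roots nz (rs := enum [set a | NN a == u]).
rewrite enum_uniq cardE size_polyDl ?size_polyXn ?size_polyN ?size_polyC ?nzu //.
apply=> //; apply/allP => a; rewrite mem_enum inE => /eqP h.
by rewrite rootE !hornerE -h subrr.
Qed.

Definition Fix := [set u : F | (u != 0) && (u ^+ q == u)].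

Lemma card_Fix : #|Fix| = q.-1.
Proof.
have E : [set u : F | u ^+ q == u] = f @: [set: K].
  apply/setP => u; rewrite inE; apply/eqP/imsetP => [h|[k _ ->]].
    by exists (g f u); rewrite ?inE // (fixed_img f hK).
  by rewrite -rmorphXn (xqK hK).
have c1 : #|[set u : F | u ^+ q == u]| = q.
  by rewrite E card_imset ?cardsT ?hK //; exact: fmorph_inj.
have := cardsD1 0 [set u : F | u ^+ q == u]; rewrite c1 inE expr0n.
have -> : (q == 0)%N = false by case: q (qgt0 hK).
rewrite /= eqxx add1n => /(congr1 predn) /= ->.
by apply: eq_card => u; rewrite !inE.
Qed.

Lemma fib_eq u : u \in Fix -> #|[set a | NN a == u]| = q.+1.
Proof.
move=> uF.
have hsum : (\sum_(u in Fix) #|[set a | NN a == u]| = q.-1 * q.+1)%N.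
  have E1 : #|[set a : F | a != 0]| = (q.-1 * q.+1)%N.
    have -> : [set a : F | a != 0] = [set~ 0] by apply/setP => a; rewrite !inE.
    rewrite cardsC1 hF.
    rewrite -mulnn -!multE /=; have := q_gt1 hK; move/ltP => ?; nia.
  rewrite -E1 -sum1dep_card.
  rewrite [RHS](partition_big NN (mem Fix)) /=; last first.
    by move=> a nz; rewrite inE NN_fix eqxx andbT /NN expf_neq0 //.
  apply: eq_bigr => v vF; rewrite -sum1dep_card; apply: eq_bigl => a.
  rewrite andb_idl // => /eqP hv; move: vF; rewrite -hv inE => /andP[+ _].
  by apply: contraNneq => ->; rewrite /NN expr0n.
have := @leqif_sum _ (mem Fix) (fun v => #|[set a | NN a == v]| == q.+1)
   (fun v => #|[set a | NN a == v]|) (fun _ => q.+1).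
move=> /(_ _) H.
have H' : forall i, i \in Fix ->
   (#|[set a | NN a == i]| <= q.+1 ?= iff (#|[set a | NN a == i]| == q.+1))%N.
  move=> i; rewrite inE => /andP[nz _]; split; [exact: fib_le|by []].
have [_ /esym] := H H'.
by rewrite hsum sum_nat_const card_Fix eqxx => /forall_inP /(_ u uF) /eqP.
Qed.

End Norm.


Section Final.
Variables (q s : nat) (K F : finFieldType) (f : {rmorphism K -> F}).
Hypotheses (hK : #|K| = q) (hF : #|F| = (q ^ 2)%N) (hs : (s <= q - 2)%N).

Local Notation n := (P1len F).
Local Notation XX := (XX q s F).
Local Notation LL := (LL s).

Definition TT := take s (enum [set k : K | k != 0]).

Lemma TT_uniq : uniq TT.
Proof. by rewrite take_uniq // enum_uniq. Qed.

Lemma TT_size : size TT = s.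
Proof.
rewrite size_takel // -cardE.
have -> : [set k : K | k != 0] = [set~ 0] by apply/setP => k; rewrite !inE.
rewrite cardsC1 hK; apply: (leq_trans hs).
by rewrite -subn1 leq_sub2l.
Qed.

Lemma TT_nz t : t \in TT -> t != 0.
Proof. by move/mem_take; rewrite mem_enum inE. Qed.

Definition QK : {poly K} := \prod_(t <- TT) ('X - t%:P).

Lemma QK_size : size QK = s.+1.
Proof. by rewrite size_prod_XsubC TT_size. Qed.

Lemma QK_top : QK`_s = 1.
Proof.
have := monic_prod_XsubC TT predT (fun t => t); rewrite -/QK => /monicP.
by rewrite lead_coefE QK_size.
Qed.

Definition cw : 'rV[K]_n :=
  \row_k (match enum_val k with Some a => QK.[g f (NN q a)] | None => 1 end).

Lemma cw_map : map_mx f cw = \sum_(m < s.+1) f (QK`_m) *: Bgen F q s (s - m) (s - m).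
Proof.
apply/rowP => k; rewrite !mxE summxE.
under eq_bigr do rewrite mxE Bgen_val.
case: (enum_val k) => [a|].
  rewrite -horner_map (fixed_img f hK (NN_fix hF a)).
  rewrite (@horner_coef_wide _ s.+1); last by rewrite size_map_poly QK_size.
  apply: eq_bigr => i _; rewrite coef_map subKn; last exact: ltn_ord i.
  by rewrite /NN -exprM mulSn.
rewrite big_ord_recr /= subnn muln0 addn0 eqxx mulr1 QK_top rmorph1 big1 ?add0r // => i _.
have : (0 < s - i)%N by rewrite subn_gt0.
by case: (s - i)%N => // r _; rewrite mulr0.
Qed.

Lemma cw_B0 : cw \in B0ext f q s.
Proof.
rewrite inE cw_map; apply: memv_suml => i _; apply: memvZ; apply: memv_span.
rewrite XXE'; apply/mapP.
by exists ((s - i)%N, (s - i)%N); rewrite // mem_LL leq_subr.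
Qed.

Lemma card_R : #|[set a : F | QK.[g f (NN q a)] == 0]| = (s * q.+1)%N.
Proof.
have -> : [set a : F | QK.[g f (NN q a)] == 0] = [set a : F | g f (NN q a) \in TT].
  by apply/setP => a; rewrite !inE -root_prod_XsubC.
rewrite -sum1dep_card (partition_big (fun a => g f (NN q a)) (mem TT)) //=.
have -> : (\sum_(j | j \in TT) \sum_(i | (g f (NN q i) \in TT) && (g f (NN q i) == j)) 1
   = \sum_(j | j \in TT) q.+1)%N.
  apply: eq_bigr => t tT; rewrite sum1dep_card.
  rewrite -(fib_eq f hK hF (u := f t)); last first.
    by rewrite inE fmorph_eq0 TT_nz //= -rmorphXn (xqK hK).
  apply: eq_card => a; rewrite !inE.
  apply/andP/eqP => [[_ /eqP <-]|h]; first by rewrite (fixed_img f hK (NN_fix hF a)).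
  by rewrite h (gf f hK) tT eqxx.
rewrite sum_nat_cond_const; congr (_ * _)%N.
rewrite -TT_size -(card_uniqP TT_uniq); apply: eq_card => t; by rewrite inE.
Qed.

Lemma cw_wt : hdist cw 0 = (q ^ 2 + 1 - s * (q + 1))%N.
Proof.
rewrite /hdist.
pose G := fun o : option F => match o with Some a => QK.[g f (NN q a)] != 0 | None => true end.
have -> : [set k | cw 0 k != (0 : 'rV[K]_n) 0 k] = [set k | G (enum_val k)].
  by apply/setP => k; rewrite !inE !mxE /G; case: (enum_val k) => // ; rewrite oner_eq0.
rewrite card_optF /=.
have := cardsC [set a : F | QK.[g f (NN q a)] == 0]; rewrite card_R hF.
have -> : ~: [set a : F | QK.[g f (NN q a)] == 0] = [set a | QK.[g f (NN q a)] != 0].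
  by apply/setP => a; rewrite !inE.
move=> E.
have e2 : (s * (q + 1) = s * q.+1)%N by rewrite addn1.
by rewrite e2 -E -addnA addKn addnC.
Qed.

End Final.


Theorem proposition3p3 (q s : nat) (K F : finFieldType)
  (f : {rmorphism K -> F})
  (hK : #|K| = q) (hF : #|F| = (q ^ 2)%N) (hs : (s <= q - 2)%N) :
  [/\ P1len F = (q ^ 2 + 1)%N,
      code_dim (B0ext f q s) = (s.+1 ^ 2)%N
    & is_min_dist (B0ext f q s) (q ^ 2 + 1 - s * (q + 1))%N].
Proof.
have hn : P1len F = (q ^ 2 + 1)%N by rewrite /P1len card_option hF addn1.
split => //.
  exact: dim_B0 hK hF hs.
split.
  exists (cw q s f), 0; split.
  - exact: cw_B0 hK hF hs.
  - by rewrite inE map_mx0 mem0v.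
  - apply/eqP => /rowP /(_ (enum_rank None)).
    by rewrite !mxE enum_rankK => /eqP; rewrite oner_eq0.
  - exact: cw_wt hK hF hs.
move=> c1 c2 h1 h2 ne.
rewrite !inE in h1 h2.
set w := map_mx f (c1 - c2).
have wB : w \in Bext F q s by rewrite /w map_mxB memvB.
have wnz : w != 0.
  apply/eqP => /eqP; rewrite -(map_mx0 f) => /eqP /map_mx_inj /eqP.
  by rewrite subr_eq0 (negPf ne).
have Z := zeros_le wB wnz.
have E : [set k | c1 0 k != c2 0 k] = ~: [set pos | w 0%R pos == 0%R].
  by apply/setP => k; rewrite !inE !mxE fmorph_eq0 subr_eq0.
rewrite /hdist E.
have C := cardsC [set pos | w 0%R pos == 0%R]; rewrite card_ord in C.
rewrite -hn.
have e2 : (s * (q + 1) = top q s)%N by rewrite /top addn1 mulnS mulnC addnC.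
by rewrite e2 leq_subLR -[X in (X <= _)%N]C leq_add2r Z.
Qed.
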